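(* Let $H<G$ be countable abelian groups such that every element of $G/H$ has odd order, and let $\pi:G\to G/H$ be the quotient map. Let $\{H=G_0<G_1<G_2<\cdots\}$ be a one-step ascending chain associated to $H$, with sequence of generators $\{g_i\}_{i\ge1}$ and (odd) indexes $m_i=[G_i:G_{i-1}]=2k_i+1$. Then every $g\in G$ can be written uniquely as \[g=h_g+\sum_{i=1}^{\infty}r_i g_i\] with $h_g\in H$, $r_i\in[-k_i,k_i]\cap\mathbb Z$, and $r_i=0$ for all $i$ larger than some $i_0$.
   Context: A one-step ascending chain of a countable locally finite group $Q$ is a chain $\{1\}=Q_0<Q_1<\cdots$ of subgroups with $Q=\bigcup_iQ_i$, together with elements $q_i$ such that $Q_i$ is generated by $q_1,\dots,q_i$ and $q_{i+1}\notin Q_i$. Given such a chain $\{Q_i\}$ of $G/H$ (which is locally finite) with generators $q_i$, the associated chain of $G$ is $G_i=\pi^{-1}(Q_i)$; a sequence of generators is any $g_i\in G$ with $\pi(g_i)=q_i$, and the indexes are $m_i=[G_i:G_{i-1}]=[Q_i:Q_{i-1}]$. *)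

(* Defs.v *)
From HB Require Import structures.
From mathcomp Require Import all_boot all_order all_algebra.
Set Implicit Arguments. Unset Strict Implicit. Unset Printing Implicit Defensive.
Import Order.TTheory GRing.Theory Num.Theory.
Local Open Scope ring_scope.

Definition is_subgroup (G : zmodType) (H : G -> Prop) : Prop :=
  H 0 /\ (forall x y, H x -> H y -> H (x - y)).

(* n is the order of the coset g + H in G/H (H a subgroup):
   the least positive n with n.(g + H) = 0, i.e. g *+ n \in H. *)
Definition coset_order (G : zmodType) (H : G -> Prop) (g : G) (n : nat) : Prop :=
  (0 < n)%N /\ H (g *+ n) /\ (forall m, (0 < m < n)%N -> ~ H (g *+ m)).

(* G_i = pi^{-1}(Q_i) = H + <g_1, ..., g_i>  (generators indexed from 1;
   g 0 is unused). *)
Definition chainG (G : zmodType) (H : G -> Prop) (g : nat -> G) (i : nat)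
  (x : G) : Prop :=
  exists h, H h /\ exists c : nat -> int,
    x = h + \sum_(1 <= j < i.+1) g j *~ c j.

(* {G_i} is the one-step ascending chain of G associated to a one-step
   ascending chain {Q_i} of G/H with generators q_i = pi(g_i):
   q_{i} \notin Q_{i-1} for i >= 1, and the union of the Q_i is G/H. *)
Definition one_step_chain (G : zmodType) (H : G -> Prop) (g : nat -> G) : Prop :=
  (forall i, (1 <= i)%N -> ~ chainG H g i.-1 (g i)) /\
  (forall x, exists i, chainG H g i x).

(* [B : A] = m for subgroups A <= B: there are exactly m cosets of A in B,
   i.e. a family of m representatives x_0..x_{m-1} in B such that every
   b in B lies in exactly one coset x_j + A. *)
Definition subgroup_index (G : zmodType) (A B : G -> Prop) (m : nat) : Prop :=
  exists x : 'I_m -> G, (forall j, B (x j)) /\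
    (forall b, B b -> exists! j, A (b - x j)).

(* Main.v *)
Require Import Defs.
From HB Require Import structures.
From mathcomp Require Import all_boot all_order all_algebra.
From mathcomp Require Import zify ring lra.
From Stdlib Require Import Classical ClassicalEpsilon.
Set Warnings "-notation-overridden,-ambiguous-paths".
Import Order.TTheory GRing.Theory Num.Theory.
Local Open Scope ring_scope.
Set Implicit Arguments. Unset Strict Implicit.
Lemma sg_N (G : zmodType) (S : G -> Prop) : is_subgroup S -> forall x, S x -> S (- x).
Proof. move=> [S0 SB] x Sx; have := SB 0 x S0 Sx; by rewrite sub0r. Qed.

Lemma sg_D (G : zmodType) (S : G -> Prop) : is_subgroup S -> forall x y, S x -> S y -> S (x + y).
Proof. move=> hS x y Sx Sy; have := hS.2 x (- y) Sx (sg_N (S:=S) hS Sy); by rewrite opprK. Qed.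

Lemma sg_Mn (G : zmodType) (S : G -> Prop) : is_subgroup S -> forall x n, S x -> S (x *+ n).
Proof. move=> hS x n Sx; elim: n => [|n IH]; first by rewrite mulr0n; exact: hS.1.
rewrite mulrS; exact: sg_D. Qed.

Lemma sg_Mz (G : zmodType) (S : G -> Prop) : is_subgroup S -> forall x z, S x -> S (x *~ z).
Proof. move=> hS x [n|n] Sx /=. exact: sg_Mn. apply: sg_N => //; exact: sg_Mn. Qed.

Lemma chain_sub (G : zmodType) (H : G -> Prop) g i : is_subgroup H -> is_subgroup (chainG H g i).
Proof.
move=> hS; split.
  exists 0; split; first exact: hS.1. exists (fun _ => 0).
  by rewrite big1 ?addr0 // => j _; rewrite mulr0z.
move=> x y [h1 [H1 [c1 ->]]] [h2 [H2 [c2 ->]]].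
exists (h1 - h2); split; first exact: hS.2.
exists (fun j => c1 j - c2 j).
rewrite opprD addrACA; congr (_ + _).
rewrite -sumrB; apply: eq_bigr => j _; by rewrite mulrzBr.
Qed.

Lemma chain_H (G : zmodType) (H : G -> Prop) g i x : H x -> chainG H g i x.
Proof. move=> Hx; exists x; split => //; exists (fun _ => 0).
by rewrite big1 ?addr0 // => j _; rewrite mulr0z. Qed.

Lemma chain0 (G : zmodType) (H : G -> Prop) g x : chainG H g 0 x -> H x.
Proof. by move=> [h [Hh [c ->]]]; rewrite big_geq // addr0. Qed.

Lemma chainS (G : zmodType) (H : G -> Prop) g i x :
  chainG H g i.+1 x <-> exists y z, chainG H g i y /\ x = y + g i.+1 *~ z.
Proof.
split.
  move=> [h [Hh [c ->]]]; exists (h + \sum_(1 <= j < i.+1) g j *~ c j), (c i.+1).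
  split; first by exists h; split => //; exists c.
  by rewrite big_nat_recr //= addrA.
move=> [y [z [[h [Hh [c ->]]] ->]]]; exists h; split => //.
exists (fun j => if j == i.+1 then z else c j).
rewrite [in RHS]big_nat_recr //= eqxx -addrA; congr (_ + (_ + _)).
apply: eq_big_nat => j /andP [_ hj]; by rewrite ifF //; apply/negbTE; rewrite neq_ltn hj.
Qed.

Lemma chain_mono (G : zmodType) (H : G -> Prop) g i x : chainG H g i x -> chainG H g i.+1 x.
Proof. move=> hx; apply/chainS; exists x, 0; by rewrite mulr0z addr0. Qed.

Lemma exists_min (P : nat -> Prop) n0 : P n0 -> exists n, P n /\ forall k, (k < n)%N -> ~ P k.
Proof.
elim/ltn_ind: n0 => n0 IH Pn0.
case: (classic (exists k, (k < n0)%N /\ P k)) => [[k [lt Pk]]|N]; first exact: IH lt Pk.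
exists n0; split => // k lt Pk; apply: N; by exists k.
Qed.

Lemma mod_red (G : zmodType) (A : G -> Prop) (y : G) (n : nat) :
  is_subgroup A -> (0 < n)%N -> A (y *+ n) ->
  forall z : int, exists t : nat, (t < n)%N /\ A (y *~ z - y *+ t).
Proof.
move=> hA n0 An z.
have n0' : (0 < n%:Z) by rewrite ltz_nat.
exists `|(z %% n)%Z|%N; split.
  have := ltz_pmod z n0'; have := modz_ge0 z (lt0r_neq0 n0').
  move=> h1 h2; lia.
rewrite pmulrn gez0_abs ?modz_ge0 ?(lt0r_neq0 n0') //.
have -> : y *~ z - y *~ (z %% n)%Z = (y *+ n) *~ (z %/ n)%Z.
  set q := (z %/ n)%Z; set r := (z %% n)%Z.
  have ez : z = q * n + r by exact: divz_eq.
    by rewrite [X in y *~ X]ez mulrzDr addrK (mulrC q) mulrzA -pmulrn.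
exact: (sg_Mz hA _ An).
Qed.

Lemma uniq_red (G : zmodType) (A : G -> Prop) (y : G) (n : nat) :
  is_subgroup A -> (forall t, (0 < t < n)%N -> ~ A (y *+ t)) ->
  forall t t', (t < n)%N -> (t' < n)%N -> A (y *+ t - y *+ t') -> t = t'.
Proof.
move=> hA hmin.
have key : forall t t', (t < n)%N -> (t' < t)%N -> ~ A (y *+ t - y *+ t').
  move=> t t' tn lt. rewrite -mulrnBr; last exact: ltnW.
  apply: hmin; apply/andP; split.
    by rewrite subn_gt0. 
  exact: leq_ltn_trans (leq_subr _ _) tn.
move=> t t' tn t'n At.
case: (ltngtP t t') => lt; last by [].
  exfalso; apply: (key t' t t'n lt); have := sg_N hA At; by rewrite opprB.
exfalso; exact: (key t t' tn lt).
Qed.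


Lemma index_facts (G : zmodType) (A B : G -> Prop) (y : G) (n0 m : nat) :
  is_subgroup A ->
  (forall x, B x <-> exists a z, A a /\ x = a + y *~ z) ->
  (0 < n0)%N -> A (y *+ n0) -> odd n0 ->
  subgroup_index A B m ->
  [/\ (0 < m)%N, A (y *+ m), (forall t, (0 < t < m)%N -> ~ A (y *+ t)) & odd m].
Proof.
move=> hA hB n0p An0 on0 [x [Bx hx]].
have [n [[np An] nmin]] := @exists_min (fun n => (0 < n)%N /\ A (y *+ n)) n0 (conj n0p An0).
have hmin : forall t, (0 < t < n)%N -> ~ A (y *+ t).
  move=> t /andP [t0 tn] At; exact: (nmin t tn (conj t0 At)).
have dvd : (n %| n0)%N.
  apply/negPn/negP => nd.
  have r0 : (0 < n0 %% n)%N by rewrite lt0n; exact: nd.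
  have h1 : (0 < n0 %% n < n)%N by rewrite r0 ltn_pmod.
  apply: (hmin _ h1).
  have := hA.2 _ _ An0 (sg_Mn hA (n0 %/ n)%N An).
  rewrite [X in y *+ X - _](divn_eq n0 n) mulrnDr mulnC mulrnA.
  by rewrite addrC addKr.
have on : odd n.
  apply/negPn/negP => en; move: on0; rewrite -dvdn2 in en.
  by rewrite -[odd n0]negbK -dvdn2 (dvdn_trans en dvd).
have ex1 : forall j, exists t : 'I_n, A (x j - y *+ t).
  move=> j; have [a [z [Aa ->]]] := (hB _).1 (Bx j).
  have [t [tn At]] := mod_red hA np An z.
  exists (Ordinal tn) => /=; rewrite -addrA; exact: sg_D.
pose f j := proj1_sig (constructive_indefinite_description _ (ex1 j)).
have hf : forall j, A (x j - y *+ f j).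
  move=> j; exact: (proj2_sig (constructive_indefinite_description _ (ex1 j))).
have finj : injective f.
  move=> j j' e.
  have [k [_ hk]] := hx _ (Bx j).
  have e1 := hk j; have e2 := hk j'.
  have kj : k = j by apply: e1; rewrite subrr; exact: hA.1.
  have kj' : k = j' by apply: e2; have := hA.2 _ _ (hf j) (hf j'); rewrite e opprB addrA subrK.
  by rewrite -kj -kj'.
have ex2 : forall t : 'I_n, exists j, A (y *+ t - x j).
  move=> t.
  have Bt : B (y *+ t) by apply/hB; exists 0, t; split; [exact: hA.1 | by rewrite add0r pmulrn].
  have [k [hk _]] := hx _ Bt; by exists k.
pose h t := proj1_sig (constructive_indefinite_description _ (ex2 t)).
have hh : forall t : 'I_n, A (y *+ t - x (h t)).
  move=> t; exact: (proj2_sig (constructive_indefinite_description _ (ex2 t))).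
have hinj : injective h.
  move=> t t' e; apply: val_inj; apply: (uniq_red hA hmin (ltn_ord t) (ltn_ord t')).
  have := hA.2 _ _ (hh t) (hh t'); by rewrite e opprB addrA subrK.
have mn : m = n.
  apply/eqP; rewrite eqn_leq; have := leq_card f finj; have := leq_card h hinj.
  by rewrite !card_ord => -> ->.
by subst m; split.
Qed.

Unset Implicit Arguments. Set Strict Implicit.
Lemma sum_ext (G : zmodType) (g : nat -> G) (r : nat -> int) (i0 N : nat) :
  (forall j, (i0 < j)%N -> r j = 0) -> (i0 <= N)%N ->
  \sum_(1 <= j < i0.+1) g j *~ r j = \sum_(1 <= j < N.+1) g j *~ r j.
Proof.
move=> hr le.
rewrite [RHS](big_cat_nat _ (n:=i0.+1)) //= [X in _ = _ + X]big_nat_cond.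
rewrite [X in _ = _ + X]big1 ?addr0 // => j /andP [/andP [hj _] _].
by rewrite hr // mulr0z.
Qed.

Lemma exist_aux (G : zmodType) (H : G -> Prop) (g : nat -> G) (m : nat -> nat) :
  is_subgroup H ->
  (forall i, (1 <= i)%N -> [/\ (0 < m i)%N, chainG H g i.-1 (g i *+ m i),
     (forall t, (0 < t < m i)%N -> ~ chainG H g i.-1 (g i *+ t)) & odd (m i)]) ->
  forall i x, chainG H g i x ->
  exists (h : G) (r : nat -> int),
       H h /\
       (forall j, (1 <= j)%N -> - ((m j)./2)%:Z <= r j <= ((m j)./2)%:Z) /\
       (forall j, (i < j)%N -> r j = 0) /\
       x = h + \sum_(1 <= j < i.+1) g j *~ r j.
Proof.
move=> hH facts; elim=> [|i IH] x hx.
  exists x, (fun _ => 0); split; first exact: chain0 hx.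
  split; first by move=> j _; lia.
  by split => //; rewrite big_geq // addr0.
have [y [z [hy ->]]] := (chainS H g i x).1 hx.
have [M0 AM _ oM] := facts i.+1 isT.
set M := m i.+1 in M0 AM oM *.
have hM : M = ((M./2) * 2 + 1)%N by rewrite -[LHS]odd_double_half oM -muln2 addnC.
set k := M./2 in hM *.
have [t [tM At]] := mod_red (chain_sub g i hH) M0 AM (z + k%:Z).
pose r0 : int := t%:Z - k%:Z.
have ey : chainG H g i (y + (g i.+1 *~ z - g i.+1 *~ r0)).
  apply: (sg_D (chain_sub g i hH)) => //.
  suff -> : g i.+1 *~ z - g i.+1 *~ r0 = g i.+1 *~ (z + k%:Z) - g i.+1 *+ t by [].
  rewrite /r0 pmulrn !mulrzDr mulrNz opprD opprK [- _ + _]addrC; by rewrite addrA.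
have [h [r [Hh [rb [r0' ey']]]]] := IH _ ey.
exists h, (fun j => if j == i.+1 then r0 else r j).
split => //; split.
  move=> j j1; case: eqP => [ej|_]; last exact: rb.
  subst j; rewrite /r0 /k -/M; lia.
split.
  move=> j lt; rewrite ifF; first by apply: r0'; exact: ltnW.
  by apply/negbTE; rewrite neq_ltn lt orbT.
rewrite big_nat_recr //= eqxx addrA.
have -> : \sum_(1 <= j < i.+1) g j *~ (if j == i.+1 then r0 else r j) =
          \sum_(1 <= j < i.+1) g j *~ r j.
  apply: eq_big_nat => j /andP [_ hj]; rewrite ifF //; apply/negbTE.
  by rewrite neq_ltn hj.
by rewrite -ey' addrA subrK.
Qed.

Lemma uniq_aux (G : zmodType) (H : G -> Prop) (g : nat -> G) (m : nat -> nat) :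
  is_subgroup H ->
  (forall i, (1 <= i)%N -> [/\ (0 < m i)%N, chainG H g i.-1 (g i *+ m i),
     (forall t, (0 < t < m i)%N -> ~ chainG H g i.-1 (g i *+ t)) & odd (m i)]) ->
  forall N h h' (r r' : nat -> int), H h -> H h' ->
  (forall j, (1 <= j)%N -> - ((m j)./2)%:Z <= r j <= ((m j)./2)%:Z) ->
  (forall j, (1 <= j)%N -> - ((m j)./2)%:Z <= r' j <= ((m j)./2)%:Z) ->
  h + \sum_(1 <= j < N.+1) g j *~ r j = h' + \sum_(1 <= j < N.+1) g j *~ r' j ->
  h = h' /\ forall j, (1 <= j <= N)%N -> r j = r' j.
Proof.
move=> hH facts; elim=> [|N IH] h h' r r' Hh Hh' rb rb'.
  rewrite !big_geq // !addr0 => ->; split => // j hj; exfalso; lia.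
move=> E; rewrite big_nat_recr //= in E; rewrite [in X in _ = X]big_nat_recr //= !addrA in E.
have [_ _ hmin oM] := facts N.+1 isT.
set M := m N.+1 in hmin oM.
have hM : M = ((M./2) * 2 + 1)%N by rewrite -[LHS]odd_double_half oM -muln2 addnC.
have ba := rb N.+1 isT; have bb := rb' N.+1 isT.
rewrite -/M in ba bb.
set a := r N.+1 in ba bb E; set b := r' N.+1 in ba bb E.
set u := h + _ in E; set u' := h' + _ in E.
have cu : chainG H g N u by exists h; split => //; exists r.
have cu' : chainG H g N u' by exists h'; split => //; exists r'.
have mem : chainG H g N (g N.+1 *~ (a - b)).
  suff -> : g N.+1 *~ (a - b) = u' - u by exact: (chain_sub g N hH).2.
  have ga : g N.+1 *~ a = u' + g N.+1 *~ b - u by rewrite -E [u + _]addrC addrK.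
  by rewrite mulrzBr ga addrAC addrK.
have eab : a = b.
  apply: NNPP => ne.
  have hd : (0 < `|a - b|%N < M)%N by lia.
  apply: (hmin _ hd).
  have [ge|lt] := boolP (0 <= a - b).
    by rewrite pmulrn gez0_abs.
  rewrite pmulrn ltz0_abs; last by rewrite ltNge.
  rewrite mulrNz; exact: sg_N (chain_sub g N hH) _ mem.
rewrite eab in E; move/addIr: E => E.
have [-> hj] := IH h h' r r' Hh Hh' rb rb' E.
split => // j /andP [j1 jN]; case: (ltngtP j N.+1) => [lt||eq]; last by rewrite eq.
  apply: hj; rewrite j1; by rewrite -ltnS.
by move=> lt; exfalso; lia.
Qed.

Theorem mainTheorem13 (G : countZmodType) (H : G -> Prop)
  (Hsub : is_subgroup H) (Hproper : exists x : G, ~ H x)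
  (Hodd : forall x : G, exists n, coset_order H x n /\ odd n)
  (g : nat -> G) (Hchain : one_step_chain H g)
  (m : nat -> nat)
  (Hm : forall i, (1 <= i)%N -> subgroup_index (chainG H g i.-1) (chainG H g i) (m i)) :
  (forall i, (1 <= i)%N -> odd (m i)) /\
  let k := fun i => (m i)./2 in
  forall x : G,
    (exists (h : G) (r : nat -> int) (i0 : nat),
       H h /\
       (forall i, (1 <= i)%N -> - (k i)%:Z <= r i <= (k i)%:Z) /\
       (forall i, (i0 < i)%N -> r i = 0) /\
       x = h + \sum_(1 <= i < i0.+1) g i *~ r i) /\
    (forall (h h' : G) (r r' : nat -> int) (i0 i0' : nat),
       H h -> H h' ->
       (forall i, (1 <= i)%N -> - (k i)%:Z <= r i <= (k i)%:Z) ->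
       (forall i, (1 <= i)%N -> - (k i)%:Z <= r' i <= (k i)%:Z) ->
       (forall i, (i0 < i)%N -> r i = 0) ->
       (forall i, (i0' < i)%N -> r' i = 0) ->
       x = h + \sum_(1 <= i < i0.+1) g i *~ r i ->
       x = h' + \sum_(1 <= i < i0'.+1) g i *~ r' i ->
       h = h' /\ forall i, (1 <= i)%N -> r i = r' i).
Proof.
have facts : forall i, (1 <= i)%N -> [/\ (0 < m i)%N, chainG H g i.-1 (g i *+ m i),
     (forall t, (0 < t < m i)%N -> ~ chainG H g i.-1 (g i *+ t)) & odd (m i)].
  case=> // p _ /=.
  have [n0 [[n0p [Hn0 _]] on0]] := Hodd (g p.+1).
  apply: (index_facts (B := chainG H g p.+1) (n0 := n0) (chain_sub g p Hsub)) => //.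
  - move=> x; exact: chainS.
  - exact: chain_H.
  - exact: (Hm p.+1).
split; first by move=> i /facts [].
move=> k x; split.
  have [i hx] := Hchain.2 x.
  have [h [r [Hh [rb [r0 ->]]]]] := exist_aux _ _ _ _ Hsub facts _ _ hx.
  by exists h, r, i.
move=> h h' r r' i0 i0' Hh Hh' rb rb' r0 r0' e e'.
set N := maxn i0 i0'.
rewrite (sum_ext _ g _ _ _ r0 (leq_maxl i0 i0' : (i0 <= N)%N)) in e.
rewrite (sum_ext _ g _ _ _ r0' (leq_maxr i0 i0' : (i0' <= N)%N)) in e'.
have [-> hj] := uniq_aux _ _ _ _ Hsub facts _ _ _ _ _ Hh Hh' rb rb' (etrans (esym e) e').
split => // j j1; case: (leqP j N) => jN; first by apply: hj; rewrite j1 jN.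
rewrite r0 ?r0' //.
  by apply: leq_ltn_trans jN; exact: leq_maxr.
by apply: leq_ltn_trans jN; exact: leq_maxl.
Qed.
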